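(* Let $(X,\mu)$ be a discrete-time BRW whose generating function satisfies $G(z|x)=\frac{1}{1+\sum_ym_{xy}(1-z(y))}$ for all $z\in[0,1]^X$, $x\in X$ (e.g. a BRW with independent diffusion and $\rho_x(n)=\frac{1}{1+\bar\rho_x}(\frac{\bar\rho_x}{1+\bar\rho_x})^n$). Then there is global survival starting from $x$ if and only if there exists $v\in[0,1]^X$ with $v(x)>0$ such that $Mv(y)\ge\frac{v(y)}{1-v(y)}$ for all $y\in X$; equivalently, if and only if there exists such $v$ with $Mv(y)=\frac{v(y)}{1-v(y)}$ for all $y$.
   Context: $S_X:=\{f:X\to\mathbb N:\sum_yf(y)<\infty\}$; a discrete-time BRW $(X,\mu)$: probability measures $\mu_x$ on $S_X$, each particle at $x$ independently replaced by $f(y)$ particles at each $y$, $f\sim\mu_x$. $m_{xy}:=\sum_ff(y)\mu_x(f)$ with $\sup_x\sum_ym_{xy}<\infty$, $Mv(y):=\sum_wm_{yw}v(w)$. $G(z|x):=\sum_f\mu_x(f)\prod_yz(y)^{f(y)}$. Convention: $a/0=+\infty$ for $a>0$. Global survival from $x$: with positive probability, starting from one particle at $x$, particles are present at every generation. *)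

(* Defs.v *)
From Stdlib Require Import Reals List ClassicalEpsilon.
Import ListNotations.
Open Scope R_scope.

Definition finsum {T : Type} (f : T -> R) (l : list T) : R :=
  fold_right (fun a acc => f a + acc) 0 l.

(* s is the sum of the family f: supremum of the finite partial sums
   (meaningful for nonnegative families). *)
Definition HasSum {T : Type} (f : T -> R) (s : R) : Prop :=
  is_lub (fun r => exists l : list T, NoDup l /\ r = finsum f l) s.

(* The sum of f (defaults to 0 when the sum is infinite / does not exist;
   it is only used below on families whose sum is finite). *)
Definition tsum {T : Type} (f : T -> R) : R :=
  match excluded_middle_informative (exists s, HasSum f s) with
  | left H => proj1_sig (constructive_indefinite_description _ H)
  | right _ => 0
  end.

Definition SX (X : Type) : Type :=
  { f : X -> nat | exists l : list X, forall y, f y <> 0%nat -> In y l }.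

Definition cnt {X : Type} (f : SX X) (y : X) : nat := proj1_sig f y.

Definition decX {X : Type} : forall x y : X, {x = y} + {x <> y} :=
  fun x y => excluded_middle_informative (x = y).

Definition particles {X : Type} (f : SX X) : list X :=
  let l := proj1_sig (constructive_indefinite_description _ (proj2_sig f)) in
  flat_map (fun y => repeat y (cnt f y)) (nodup decX l).

Definition zeroC (X : Type) : SX X.
Proof. exists (fun _ => 0%nat). exists nil. intros y H; now apply H. Defined.

Definition deltaC {X : Type} (x : X) : SX X.
Proof.
  exists (fun y => if decX x y then 1%nat else 0%nat).
  exists [x]. intros y H. destruct (decX x y) as [e|e]; [left; exact e | now elim H].
Defined.

Definition is_prob {X : Type} (mu : X -> SX X -> R) : Prop :=
  forall x, (forall f, 0 <= mu x f) /\ HasSum (mu x) 1.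

Definition mm {X : Type} (mu : X -> SX X -> R) (x y : X) : R :=
  tsum (fun f : SX X => INR (cnt f y) * mu x f).

(* sup_x sum_y m_{xy} < infinity  (stated on finite partial sums so that all
   the series involved are genuinely finite) *)
Definition bounded_mean {X : Type} (mu : X -> SX X -> R) : Prop :=
  exists K : R, forall x (ly : list X) (lf : list (SX X)),
    NoDup ly -> NoDup lf ->
    finsum (fun y => finsum (fun f => INR (cnt f y) * mu x f) lf) ly <= K.

Definition Mop {X : Type} (mu : X -> SX X -> R) (v : X -> R) (y : X) : R :=
  tsum (fun w => mm mu y w * v w).

(* G(z|x) = sum_f mu_x(f) prod_y z(y)^{f(y)} *)
Definition Gen {X : Type} (mu : X -> SX X -> R) (z : X -> R) (x : X) : R :=
  tsum (fun f : SX X => mu x f * fold_right Rmult 1 (map z (particles f))).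

(* One-step transition probability: each particle (at position p_i) is
   independently replaced by f_i ~ mu_{p_i}; the new configuration is sum_i f_i. *)
Definition trans {X : Type} (mu : X -> SX X -> R) (eta zeta : SX X) : R :=
  let ps := particles eta in
  tsum (fun fs : { fs : list (SX X) |
                   length fs = length ps /\
                   forall y, cnt zeta y = fold_right (fun f acc => (cnt f y + acc)%nat) 0%nat fs } =>
          fold_right (fun pf acc => mu (fst pf) (snd pf) * acc) 1
                     (combine ps (proj1_sig fs))).

Fixpoint transN {X : Type} (mu : X -> SX X -> R) (n : nat) (eta zeta : SX X) : R :=
  match n with
  | O => if excluded_middle_informative (eta = zeta) then 1 else 0
  | S k => tsum (fun xi => transN mu k eta xi * trans mu xi zeta)
  end.

(* Global survival from x: with positive probability, starting from one particle
   at x, particles are present at every generation.  The event is the decreasing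
   intersection of {Z_n <> 0}, so its probability is inf_n P_x(Z_n <> 0). *)
Definition global_survival {X : Type} (mu : X -> SX X -> R) (x : X) : Prop :=
  exists eps : R, 0 < eps /\
    forall n : nat, 1 - transN mu n (deltaC x) (zeroC X) >= eps.

(* None stands for +infinity (v y = 1, i.e. a/0 with a = 1 > 0). *)
Definition ratio (a : R) : option R :=
  if Rlt_dec a 1 then Some (a / (1 - a)) else None.

Definition ge_ratio (b a : R) : Prop :=
  match ratio a with Some r => b >= r | None => False end.

Definition eq_ratio (b a : R) : Prop :=
  match ratio a with Some r => b = r | None => False end.

(* Main.v *)
Require Import Defs.
From Stdlib Require Import Reals List ClassicalEpsilon Lra Lia Permutation FunctionalExtensionality ProofIrrelevance.
Import ListNotations.
Open Scope R_scope.


Definition decG {T : Type} : forall x y : T, {x = y} + {x <> y} :=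
  fun x y => excluded_middle_informative (x = y).

Section Fin.
Context {T : Type}.
Implicit Types (f g : T -> R) (l : list T).

Lemma finsum_app f l1 l2 : finsum f (l1 ++ l2) = finsum f l1 + finsum f l2.
Proof. induction l1; simpl; [lra| rewrite IHl1; lra]. Qed.

Lemma finsum_plus f g l : finsum (fun a => f a + g a) l = finsum f l + finsum g l.
Proof. induction l; simpl; [lra| rewrite IHl; lra]. Qed.

Lemma finsum_scal c f l : finsum (fun a => c * f a) l = c * finsum f l.
Proof. induction l; simpl; [lra| rewrite IHl; lra]. Qed.

Lemma finsum_le f g l : (forall a, In a l -> f a <= g a) -> finsum f l <= finsum g l.
Proof. induction l; simpl; intros H; [lra|].
  assert (f a <= g a) by auto. assert (finsum f l <= finsum g l) by auto. lra. Qed.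

Lemma finsum_ext_in f g l : (forall a, In a l -> f a = g a) -> finsum f l = finsum g l.
Proof. induction l; simpl; intros H; [lra|]. rewrite H, IHl; auto. Qed.

Lemma finsum_nonneg f l : (forall a, 0 <= f a) -> 0 <= finsum f l.
Proof. intros H; induction l; simpl; [lra|]. specialize (H a); lra. Qed.

Lemma finsum_remove_le f l a : (forall a, 0 <= f a) ->
  finsum f (remove decG a l) <= finsum f l.
Proof.
  intros Hf; induction l as [|c l IH']; simpl; [lra|].
  destruct (decG a c); simpl; pose proof (Hf c); lra.
Qed.

Lemma finsum_remove f l a : (forall a, 0 <= f a) -> In a l ->
  f a + finsum f (remove decG a l) <= finsum f l.
Proof.
  intros Hf; induction l as [|b l IH]; simpl; [tauto|].
  intros [->|Hin].
  - destruct (decG a a) as [_|n]; [|congruence].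
    pose proof (finsum_remove_le f l a Hf). lra.
  - destruct (decG a b) as [e|n]; simpl.
    + subst b. pose proof (IH Hin). pose proof (Hf a).
      pose proof (finsum_remove_le f l a Hf). lra.
    + pose proof (IH Hin); lra.
Qed.

Lemma finsum_incl f l1 l2 : (forall a, 0 <= f a) -> NoDup l1 -> incl l1 l2 ->
  finsum f l1 <= finsum f l2.
Proof.
  intros Hf Hnd; revert l2; induction Hnd as [|a l1 Hna Hnd IH]; intros l2 Hi; simpl.
  - apply finsum_nonneg; auto.
  - assert (Ha : In a l2) by (apply Hi; left; auto).
    pose proof (finsum_remove f l2 a Hf Ha).
    assert (finsum f l1 <= finsum f (remove decG a l2)).
    { apply IH. intros b Hb. apply in_in_remove.
      - intros ->; contradiction.
      - apply Hi; right; auto. }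
    lra.
Qed.

Lemma finsum_single_nodup f l a : NoDup l -> (forall b, b <> a -> f b = 0) ->
  finsum f l = if excluded_middle_informative (In a l) then f a else 0.
Proof.
  intros Hnd Hz; induction Hnd as [|b l Hnb Hnd IH]; simpl.
  - destruct excluded_middle_informative as [[]|]; lra.
  - rewrite IH. destruct (excluded_middle_informative (In a l)) as [i|ni];
    destruct (excluded_middle_informative (b = a \/ In a l)) as [i'|ni'].
    + assert (b <> a) by (intros ->; contradiction). rewrite Hz; auto; lra.
    + tauto.
    + destruct i' as [<-|]; [lra|tauto].
    + assert (b <> a) by tauto. rewrite Hz; auto; lra.
Qed.

End Fin.

Lemma finsum_swap {I J : Type} (b : I -> J -> R) li lj :
  finsum (fun i => finsum (b i) lj) li = finsum (fun j => finsum (fun i => b i j) li) lj.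
Proof.
  induction li as [|i li IH]; simpl.
  - induction lj; simpl; lra.
  - rewrite IH, <- finsum_plus. reflexivity.
Qed.

Lemma finsum_map {A B : Type} (f : B -> R) (g : A -> B) l :
  finsum f (map g l) = finsum (fun a => f (g a)) l.
Proof. induction l; simpl; [lra| rewrite IHl; lra]. Qed.

Lemma finsum_prod {A B : Type} (h : A * B -> R) la lb :
  finsum h (list_prod la lb) = finsum (fun a => finsum (fun b => h (a, b)) lb) la.
Proof.
  induction la; simpl; [lra|]. rewrite finsum_app, finsum_map, IHla. lra.
Qed.

Lemma NoDup_prod {A B : Type} (la : list A) (lb : list B) :
  NoDup la -> NoDup lb -> NoDup (list_prod la lb).
Proof.
  intros Ha Hb; induction Ha as [|a la Hna Hnd IH]; simpl; [constructor|].
  apply NoDup_app; auto.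
  - apply FinFun.Injective_map_NoDup; auto. intros x y H; congruence.
  - intros [a' b'] H1 H2. apply in_map_iff in H1 as [y [Hy _]]. inversion Hy; subst.
    apply in_prod_iff in H2 as [H2 _]. contradiction.
Qed.


Definition SumLe {T : Type} (f : T -> R) (B : R) : Prop :=
  forall l, NoDup l -> finsum f l <= B.

Section HS.
Context {T : Type}.
Implicit Types (f g : T -> R) (l : list T).

Lemma hs_ub f s : HasSum f s -> SumLe f s.
Proof. intros [H _] l Hl. apply H. eauto. Qed.

Lemma hs_least f s B : HasSum f s -> SumLe f B -> s <= B.
Proof. intros [_ H] HB. apply H. intros r [l [Hl ->]]. auto. Qed.

Lemma hs_intro f s : SumLe f s -> (forall B, SumLe f B -> s <= B) -> HasSum f s.
Proof. intros H1 H2; split.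
  - intros r [l [Hl ->]]; auto.
  - intros B HB. apply H2. intros l Hl. apply HB; eauto. Qed.

Lemma hs_unique f s t : HasSum f s -> HasSum f t -> s = t.
Proof. intros H1 H2. apply Rle_antisym; eapply hs_least; eauto using hs_ub. Qed.

Lemma tsum_hs f s : HasSum f s -> tsum f = s.
Proof. intros H. unfold tsum. destruct excluded_middle_informative as [e|n].
  - destruct constructive_indefinite_description as [t Ht]; simpl. eapply hs_unique; eauto.
  - exfalso; eauto. Qed.

Lemma tsum_default f : ~ (exists s, HasSum f s) -> tsum f = 0.
Proof. intros H. unfold tsum. destruct excluded_middle_informative; tauto. Qed.

Lemma hs_exists f B : SumLe f B -> exists s, HasSum f s.
Proof.
  intros H. destruct (completeness (fun r => exists l, NoDup l /\ r = finsum f l)) as [m Hm].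
  - exists B. intros r [l [Hl ->]]; auto.
  - exists 0, nil. split; [constructor|reflexivity].
  - exists m; exact Hm.
Qed.

Lemma hs_tsum f B : SumLe f B -> HasSum f (tsum f).
Proof. intros H. destruct (hs_exists f B H) as [s Hs]. rewrite (tsum_hs f s Hs); auto. Qed.

Lemma hs_nonneg f s : HasSum f s -> 0 <= s.
Proof. intros H. apply (hs_ub f s H nil). constructor. Qed.

Lemma tsum_nonneg f : (forall a, 0 <= f a) -> 0 <= tsum f.
Proof. intros Hf. unfold tsum. destruct excluded_middle_informative as [e|n]; [|lra].
  destruct constructive_indefinite_description as [t Ht]; simpl. eapply hs_nonneg; eauto. Qed.

Lemma hs_le f g s t : (forall a, f a <= g a) -> HasSum f s -> HasSum g t -> s <= t.
Proof. intros H Hf Hg. eapply hs_least; eauto. intros l Hl.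
  eapply Rle_trans; [apply finsum_le; intros; apply H|]. apply hs_ub; auto. Qed.

Lemma hs_ext f g s : (forall a, f a = g a) -> HasSum f s -> HasSum g s.
Proof. intros H. replace g with f; auto. apply functional_extensionality; auto. Qed.

Lemma tsum_ext f g : (forall a, f a = g a) -> tsum f = tsum g.
Proof. intros H. replace g with f; auto. apply functional_extensionality; auto. Qed.

Lemma hs_zero : HasSum (fun _ : T => 0) 0.
Proof. apply hs_intro.
  - intros l _. induction l; simpl; lra.
  - intros B HB. apply (HB nil); constructor. Qed.

Lemma hs_scale c f s : 0 <= c -> HasSum f s -> HasSum (fun a => c * f a) (c * s).
Proof.
  intros Hc Hs. destruct (Req_dec c 0) as [->|Hc0].
  - eapply hs_ext; [|rewrite Rmult_0_l; apply hs_zero]. intros; simpl; lra.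
  - apply hs_intro.
    + intros l Hl. rewrite finsum_scal. apply Rmult_le_compat_l; auto. apply hs_ub; auto.
    + intros B HB. assert (s <= B / c).
      { eapply hs_least; eauto. intros l Hl. specialize (HB l Hl). rewrite finsum_scal in HB.
        apply Rmult_le_reg_l with c; [lra|]. field_simplify; lra. }
      apply Rmult_le_reg_l with (/ c); [apply Rinv_0_lt_compat; lra|].
      replace (/ c * (c * s)) with s by (field; lra).
      replace (/ c * B) with (B / c) by (unfold Rdiv; ring). auto.
Qed.

Lemma tsum_scale c f : 0 <= c -> tsum (fun a => c * f a) = c * tsum f.
Proof.
  intros Hc. destruct (excluded_middle_informative (exists s, HasSum f s)) as [[s Hs]|n].
  - rewrite (tsum_hs f s Hs). apply tsum_hs. apply hs_scale; auto.
  - rewrite (tsum_default f n). destruct (Req_dec c 0) as [->|Hc0].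
    + rewrite (tsum_hs _ 0); [lra|]. eapply hs_ext; [|apply hs_zero]. intros; simpl; lra.
    + rewrite tsum_default; [lra|]. intros [t Ht]. apply n. exists (/c * t).
      eapply hs_ext; [|apply hs_scale; [|exact Ht]]. intros a; simpl. field; auto.
      left; apply Rinv_0_lt_compat; lra.
Qed.

Lemma hs_single f a : (forall b, 0 <= f b) -> (forall b, b <> a -> f b = 0) -> HasSum f (f a).
Proof.
  intros Hf Hz. apply hs_intro.
  - intros l Hl. rewrite (finsum_single_nodup f l a Hl Hz). destruct excluded_middle_informative; auto; lra.
  - intros B HB. specialize (HB [a] (NoDup_cons _ (fun H : In _ nil => H) (NoDup_nil _))). simpl in HB. lra.
Qed.

Lemma hs_add f g s t : (forall a, 0 <= f a) -> (forall a, 0 <= g a) ->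
  HasSum f s -> HasSum g t -> HasSum (fun a => f a + g a) (s + t).
Proof.
  intros Hf Hg Hs Ht. apply hs_intro.
  - intros l Hl. rewrite finsum_plus. pose proof (hs_ub f s Hs l Hl). pose proof (hs_ub g t Ht l Hl). lra.
  - intros B HB.
    assert (forall l1 l2, NoDup l1 -> NoDup l2 -> finsum f l1 + finsum g l2 <= B).
    { intros l1 l2 H1 H2. set (U := nodup decG (l1 ++ l2)).
      assert (NoDup U) by apply NoDup_nodup.
      assert (finsum f l1 <= finsum f U).
      { apply finsum_incl; auto. intros a Ha. apply nodup_In, in_or_app; auto. }
      assert (finsum g l2 <= finsum g U).
      { apply finsum_incl; auto. intros a Ha. apply nodup_In, in_or_app; auto. }
      pose proof (HB U H) as HH. rewrite finsum_plus in HH. lra. }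
    assert (s <= B - t).
    { eapply hs_least; eauto. intros l1 H1.
      assert (t <= B - finsum f l1).
      { eapply hs_least; eauto. intros l2 H2. pose proof (H l1 l2 H1 H2). lra. }
      lra. }
    lra.
Qed.

End HS.

Lemma hs_reindex {A B : Type} (g : A -> B) (f : B -> R) s :
  (forall b, 0 <= f b) -> (forall a1 a2, g a1 = g a2 -> a1 = a2) ->
  (forall b, f b <> 0 -> exists a, g a = b) ->
  (HasSum (fun a => f (g a)) s <-> HasSum f s).
Proof.
  intros Hf Hinj Hsur.
  assert (E1 : forall la, NoDup la -> exists lb, NoDup lb /\ finsum (fun a => f (g a)) la = finsum f lb).
  { intros la Hla. exists (map g la). split.
    - apply FinFun.Injective_map_NoDup; auto.
    - rewrite finsum_map; auto. }
  assert (E2 : forall lb, NoDup lb -> exists la, NoDup la /\ finsum f lb = finsum (fun a => f (g a)) la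
              /\ (forall a, In a la -> In (g a) lb)).
  { intros lb Hlb; induction Hlb as [|b lb Hnb Hnd IH].
    - exists nil; split; [constructor|split; [reflexivity| intros a []]].
    - destruct IH as [la [H1 [H2 H3]]].
      destruct (Req_dec (f b) 0) as [e|n].
      + exists la; repeat split; auto. simpl; rewrite e, H2; lra. intros a Ha; right; auto.
      + destruct (Hsur b n) as [a Ha]. exists (a :: la); repeat split.
        * constructor; auto. intros Hin. apply H3 in Hin. rewrite Ha in Hin. contradiction.
        * simpl. rewrite Ha, H2. reflexivity.
        * intros a' [<-|Hin]; [left; auto| right; auto]. }
  split; intros H.
  - apply hs_intro.
    + intros lb Hlb. destruct (E2 lb Hlb) as [la [H1 [H2 _]]]. rewrite H2. apply (hs_ub _ _ H); auto.
    + intros B0 HB. eapply hs_least; eauto. intros la Hla. destruct (E1 la Hla) as [lb [H1 H2]].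
      rewrite H2; auto.
  - apply hs_intro.
    + intros la Hla. destruct (E1 la Hla) as [lb [H1 H2]]. rewrite H2. apply (hs_ub _ _ H); auto.
    + intros B0 HB. eapply hs_least; eauto. intros lb Hlb. destruct (E2 lb Hlb) as [la [H1 [H2 _]]].
      rewrite H2; auto.
Qed.

Lemma tsum_reindex {A B : Type} (g : A -> B) (f : B -> R) :
  (forall b, 0 <= f b) -> (forall a1 a2, g a1 = g a2 -> a1 = a2) ->
  (forall b, f b <> 0 -> exists a, g a = b) ->
  tsum (fun a => f (g a)) = tsum f.
Proof.
  intros H1 H2 H3. destruct (excluded_middle_informative (exists s, HasSum f s)) as [[s Hs]|n].
  - rewrite (tsum_hs f s Hs). apply tsum_hs. apply (hs_reindex g f s); auto.
  - rewrite (tsum_default f n). apply tsum_default. intros [s Hs]. apply n. exists s.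
    apply (hs_reindex g f s); auto.
Qed.

Lemma sup_swap {I J : Type} (b : I -> J -> R) (s : I -> R) (li : list I) (B : R) :
  (forall i j, 0 <= b i j) -> (forall i, HasSum (b i) (s i)) ->
  (forall lj, NoDup lj -> finsum (fun i => finsum (b i) lj) li <= B) -> finsum s li <= B.
Proof.
  intros Hb Hs. revert B; induction li as [|i li IH]; intros B H; simpl.
  - specialize (H nil (NoDup_nil _)). simpl in H. auto.
  - assert (finsum s li <= B - s i); [|lra].
    apply IH. intros lj Hlj.
    assert (s i <= B - finsum (fun i0 => finsum (b i0) lj) li); [|lra].
    eapply hs_least; [apply Hs|]. intros lj' Hlj'.
    set (U := nodup decG (lj' ++ lj)).
    assert (HU : NoDup U) by apply NoDup_nodup.
    assert (finsum (b i) lj' <= finsum (b i) U).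
    { apply finsum_incl; auto. intros a Ha. apply nodup_In, in_or_app; auto. }
    assert (finsum (fun i0 => finsum (b i0) lj) li <= finsum (fun i0 => finsum (b i0) U) li).
    { apply finsum_le. intros i0 _. apply finsum_incl; auto. intros a Ha. apply nodup_In, in_or_app; auto. }
    specialize (H U HU). simpl in H. lra.
Qed.

Lemma tonelli {I J : Type} (b : I -> J -> R) (s : I -> R) (S : R) :
  (forall i j, 0 <= b i j) -> (forall i, HasSum (b i) (s i)) -> HasSum s S ->
  (forall j, HasSum (fun i => b i j) (tsum (fun i => b i j))) /\
  HasSum (fun j => tsum (fun i => b i j)) S.
Proof.
  intros Hb Hs HS.
  assert (Hc : forall j, HasSum (fun i => b i j) (tsum (fun i => b i j))).
  { intros j. apply hs_tsum with S. intros li Hli.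
    eapply Rle_trans; [|apply (hs_ub s S HS li Hli)]. apply finsum_le. intros i _.
    pose proof (hs_ub _ _ (Hs i) [j] (NoDup_cons _ (fun H : In _ nil => H) (NoDup_nil _))). simpl in H. lra. }
  split; auto. apply hs_intro.
  - intros lj Hlj. apply (sup_swap (fun j i => b i j)); auto.
    intros li Hli. rewrite <- finsum_swap.
    eapply Rle_trans; [|apply (hs_ub s S HS li Hli)]. apply finsum_le. intros i _.
    apply hs_ub; auto.
  - intros B HB. eapply hs_least; eauto. intros li Hli. apply (sup_swap b); auto.
    intros lj Hlj. rewrite finsum_swap. eapply Rle_trans; [|apply (HB lj Hlj)].
    apply finsum_le. intros j _. apply hs_ub; auto.
Qed.

Lemma hs_pair {A B : Type} (h : A * B -> R) (s : A -> R) (S : R) :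
  (forall p, 0 <= h p) -> (forall a, HasSum (fun b => h (a, b)) (s a)) -> HasSum s S ->
  HasSum h S.
Proof.
  intros Hh Hs HS. apply hs_intro.
  - intros L HL. set (La := nodup decG (map fst L)). set (Lb := nodup decG (map snd L)).
    eapply Rle_trans; [apply (finsum_incl h L (list_prod La Lb)); auto|].
    + intros [a b] Hin. apply in_prod; apply nodup_In; [apply (in_map fst L (a,b)) | apply (in_map snd L (a,b))]; auto.
    + rewrite finsum_prod. eapply Rle_trans; [|apply (hs_ub s S HS La (NoDup_nodup _ _))].
      apply finsum_le. intros a _. apply (hs_ub _ _ (Hs a)). apply NoDup_nodup.
  - intros B0 HB. eapply hs_least; eauto. intros La HLa.
    apply (sup_swap (fun a b => h (a, b))); auto. intros Lb HLb.
    rewrite <- finsum_prod. apply HB. apply NoDup_prod; auto.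
Qed.

Lemma hs_prod {A B : Type} (f : A -> R) (g : B -> R) s t :
  (forall a, 0 <= f a) -> (forall b, 0 <= g b) -> HasSum f s -> HasSum g t ->
  HasSum (fun p => f (fst p) * g (snd p)) (s * t).
Proof.
  intros Hf Hg Hs Ht. apply (hs_pair _ (fun a => f a * t)).
  - intros [a b]; simpl. apply Rmult_le_pos; auto.
  - intros a; simpl. apply hs_scale; auto.
  - replace (s * t) with (t * s) by ring.
    eapply hs_ext; [|apply (hs_scale t f s); auto; eapply hs_nonneg; eauto].
    intros; simpl; ring.
Qed.


Section Conf.
Context {X : Type}.

Definition pwl (z : X -> R) (l : list X) : R := fold_right Rmult 1 (map z l).
Definition pw (z : X -> R) (f : SX X) : R := pwl z (particles f).

Lemma SX_eq (a b : SX X) : (forall y, cnt a y = cnt b y) -> a = b.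
Proof. destruct a as [fa pa], b as [fb pb]; unfold cnt; simpl; intros H.
  apply subset_eq_compat. apply functional_extensionality; auto. Qed.

Lemma count_flat (f : SX X) (l : list X) y : NoDup l ->
  count_occ decX (flat_map (fun w => repeat w (cnt f w)) l) y =
  if excluded_middle_informative (In y l) then cnt f y else 0%nat.
Proof.
  intros Hnd; induction Hnd as [|a l Hna Hnd IH]; simpl.
  - destruct excluded_middle_informative as [[]|]; auto.
  - rewrite count_occ_app, IH.
    destruct (excluded_middle_informative (a = y)) as [->|n].
    + rewrite count_occ_repeat_eq; auto.
      destruct (excluded_middle_informative (In y l)); [contradiction|].
      destruct excluded_middle_informative as [|n0]; [lia|tauto].
    + rewrite count_occ_repeat_neq; auto.
      destruct (excluded_middle_informative (In y l));
      destruct (excluded_middle_informative (a = y \/ In y l)); try tauto; lia.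
Qed.

Lemma count_particles (f : SX X) y : count_occ decX (particles f) y = cnt f y.
Proof.
  unfold particles. destruct (constructive_indefinite_description _ (proj2_sig f)) as [l Hl]; simpl.
  rewrite count_flat by apply NoDup_nodup.
  destruct excluded_middle_informative as [i|n]; auto.
  destruct (Nat.eq_dec (cnt f y) 0) as [e|e]; auto.
  exfalso; apply n, nodup_In, Hl; auto.
Qed.

Lemma pwl_perm z l1 l2 : Permutation l1 l2 -> pwl z l1 = pwl z l2.
Proof. unfold pwl; induction 1; simpl; auto; try rewrite IHPermutation; try ring.
  rewrite IHPermutation1; auto. Qed.

Lemma pwl_app z l1 l2 : pwl z (l1 ++ l2) = pwl z l1 * pwl z l2.
Proof. unfold pwl; induction l1; simpl; [ring|]. rewrite IHl1; ring. Qed.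

Lemma pwl_bounds z l : (forall y, 0 <= z y <= 1) -> 0 <= pwl z l <= 1.
Proof. intros Hz; unfold pwl; induction l; simpl; [lra|].
  specialize (Hz a). destruct IHl. split; [apply Rmult_le_pos; lra|]. nra. Qed.

Lemma pwl_mono z z' l : (forall y, 0 <= z y <= z' y) -> pwl z l <= pwl z' l.
Proof. intros Hz; unfold pwl; induction l; simpl; [lra|].
  assert (0 <= fold_right Rmult 1 (map z l)).
  { clear IHl; induction l; simpl; [lra|]. apply Rmult_le_pos; auto. apply Hz. }
  specialize (Hz a). apply Rmult_le_compat; lra. Qed.

Definition sumcnt (fs : list (SX X)) (y : X) : nat :=
  fold_right (fun f acc => (cnt f y + acc)%nat) 0%nat fs.

Lemma count_concat fs y : count_occ decX (flat_map particles fs) y = sumcnt fs y.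
Proof. induction fs; simpl; auto. rewrite count_occ_app, count_particles, IHfs; auto. Qed.

Lemma pw_sum z zeta fs : (forall y, cnt zeta y = sumcnt fs y) ->
  pw z zeta = fold_right Rmult 1 (map (pw z) fs).
Proof.
  intros H. unfold pw. rewrite (pwl_perm z _ (flat_map particles fs)).
  - clear H; induction fs; simpl; auto. rewrite pwl_app, IHfs; auto.
  - apply Permutation_count_occ with (eq_dec := decX). intros y.
    rewrite count_particles, count_concat; auto.
Qed.

Definition sumC (fs : list (SX X)) : SX X.
Proof.
  exists (sumcnt fs). exists (flat_map particles fs). intros y Hy.
  apply (count_occ_In decX). rewrite count_concat. lia.
Defined.

Lemma sumC_cnt fs y : cnt (sumC fs) y = sumcnt fs y.
Proof. reflexivity. Qed.

Lemma pw_delta z x : pw z (deltaC x) = z x.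
Proof.
  unfold pw. rewrite (pwl_perm z _ [x]).
  - unfold pwl; simpl; ring.
  - apply Permutation_count_occ with (eq_dec := decX). intros y.
    rewrite count_particles. unfold cnt, deltaC; simpl. destruct (decX x y); auto.
Qed.

Lemma pw_zero_conf z : pw z (zeroC X) = 1.
Proof.
  unfold pw. rewrite (pwl_perm z _ []).
  - reflexivity.
  - apply Permutation_count_occ with (eq_dec := decX). intros y.
    rewrite count_particles. reflexivity.
Qed.

Lemma pw_zero_fun zeta : zeta <> zeroC X -> pw (fun _ => 0) zeta = 0.
Proof.
  intros H. unfold pw. destruct (particles zeta) as [|a l] eqn:E.
  - exfalso; apply H. apply SX_eq. intros y. rewrite <- count_particles, E. reflexivity.
  - unfold pwl; simpl; ring.
Qed.

End Conf.


Section Branch.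
Context {X : Type} (mu : X -> SX X -> R) (Hmu : forall x f, 0 <= mu x f).

Definition W (ps : list X) (fs : list (SX X)) : R :=
  fold_right (fun pf acc => mu (fst pf) (snd pf) * acc) 1 (combine ps fs).

Lemma W_nonneg ps fs : 0 <= W ps fs.
Proof. unfold W. generalize (combine ps fs); intros l; induction l; simpl; [lra|].
  apply Rmult_le_pos; auto. Qed.

Variable z : X -> R.
Hypothesis Hz : forall y, 0 <= z y <= 1.
Hypothesis HGz : forall p, HasSum (fun f => mu p f * pw z f) (Gen mu z p).

Definition Ls (ps : list X) := {fs : list (SX X) | length fs = length ps}.

Lemma pw_nonneg f : 0 <= pw z f.
Proof. apply pwl_bounds; auto. Qed.

Lemma prodpw_nonneg fs : 0 <= fold_right Rmult 1 (map (pw z) fs).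
Proof. induction fs; simpl; [lra|]. apply Rmult_le_pos; auto. apply pw_nonneg. Qed.

Lemma stepA ps : HasSum (fun fs : Ls ps => W ps (proj1_sig fs) * fold_right Rmult 1 (map (pw z) (proj1_sig fs)))
   (fold_right Rmult 1 (map (fun p => Gen mu z p) ps)).
Proof.
  induction ps as [|p ps IH].
  - set (a0 := exist (fun fs : list (SX X) => length fs = length (@nil X)) nil eq_refl : Ls nil).
    pose proof (hs_single (fun fs : Ls nil => W nil (proj1_sig fs) * fold_right Rmult 1 (map (pw z) (proj1_sig fs))) a0) as H.
    simpl in H. rewrite Rmult_1_r in H. simpl. apply H.
    + intros b. apply Rmult_le_pos; [apply W_nonneg|apply prodpw_nonneg].
    + intros [[|f fs] Hb] Hne; [exfalso; apply Hne; apply subset_eq_compat; auto| discriminate Hb].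
  - set (g := fun pr : SX X * Ls ps => exist (fun fs : list (SX X) => length fs = length (p :: ps))
                (fst pr :: proj1_sig (snd pr)) (f_equal S (proj2_sig (snd pr)))).
    apply (hs_reindex g).
    + intros b. apply Rmult_le_pos; [apply W_nonneg|apply prodpw_nonneg].
    + intros [a1 [l1 h1]] [a2 [l2 h2]] Heq. unfold g in Heq; simpl in Heq. injection Heq as -> ->.
      f_equal. apply subset_eq_compat; auto.
    + intros [[|f fs] Hb] _; [discriminate Hb|].
      simpl in Hb. injection Hb as Hb2. exists (f, exist _ fs Hb2). unfold g; simpl.
      apply subset_eq_compat; auto.
    + eapply hs_ext; [|apply (hs_prod (fun f => mu p f * pw z f)
              (fun fs : Ls ps => W ps (proj1_sig fs) * fold_right Rmult 1 (map (pw z) (proj1_sig fs))))].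
      * intros [f [fs h]]; unfold g, W; simpl. ring.
      * intros f; apply Rmult_le_pos; auto; apply pw_nonneg.
      * intros b; apply Rmult_le_pos; [apply W_nonneg|apply prodpw_nonneg].
      * apply HGz.
      * apply IH.
Qed.

Definition Tr (ps : list X) (zeta : SX X) : R :=
  tsum (fun fs : {fs : list (SX X) | length fs = length ps /\
                   forall y, cnt zeta y = fold_right (fun f acc => (cnt f y + acc)%nat) 0%nat fs} =>
          W ps (proj1_sig fs)).

Lemma trans_Tr xi zeta : trans mu xi zeta = Tr (particles xi) zeta.
Proof. reflexivity. Qed.

Lemma stepB ps : HasSum (fun zeta => Tr ps zeta * pw z zeta)
   (fold_right Rmult 1 (map (fun p => Gen mu z p) ps)).
Proof.
  set (c := fun (zeta : SX X) (fs : Ls ps) =>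
         if excluded_middle_informative (forall y, cnt zeta y = sumcnt (proj1_sig fs) y)
         then W ps (proj1_sig fs) else 0).
  assert (Hc : forall zeta fs, 0 <= c zeta fs).
  { intros; unfold c; destruct excluded_middle_informative; [apply W_nonneg|lra]. }
  set (b := fun (fs : Ls ps) zeta => c zeta fs * pw z zeta).
  assert (Hb : forall fs zeta, 0 <= b fs zeta).
  { intros; unfold b; apply Rmult_le_pos; auto; apply pw_nonneg. }
  destruct (tonelli b (fun fs => W ps (proj1_sig fs) * fold_right Rmult 1 (map (pw z) (proj1_sig fs))) (fold_right Rmult 1 (map (fun p => Gen mu z p) ps)) Hb)
    as [_ H]; [| apply stepA |].
  - intros fs.
    assert (E : b fs (sumC (proj1_sig fs)) = W ps (proj1_sig fs) * fold_right Rmult 1 (map (pw z) (proj1_sig fs))).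
    { unfold b, c. destruct excluded_middle_informative as [e|n].
      - rewrite (pw_sum z (sumC (proj1_sig fs)) (proj1_sig fs)) by auto. reflexivity.
      - exfalso; apply n; intros; reflexivity. }
    rewrite <- E. apply hs_single; auto.
    intros zeta Hne. unfold b, c. destruct excluded_middle_informative as [e'|n']; [|lra].
    exfalso; apply Hne. apply SX_eq. intros y; rewrite e'; reflexivity.
  - eapply hs_ext; [|exact H]. intros zeta. unfold b.
    rewrite (tsum_ext _ (fun fs => pw z zeta * c zeta fs)) by (intros; ring).
    rewrite tsum_scale by apply pw_nonneg. rewrite Rmult_comm. f_equal.
    unfold Tr. symmetry.
    set (K := {fs : list (SX X) | length fs = length ps /\
                   forall y, cnt zeta y = fold_right (fun f acc => (cnt f y + acc)%nat) 0%nat fs}).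
    set (g := fun k : K => exist (fun fs : list (SX X) => length fs = length ps) (proj1_sig k) (proj1 (proj2_sig k))).
    transitivity (tsum (fun k => c zeta (g k))); [|apply (tsum_reindex g (c zeta)); auto].
    + apply tsum_ext. intros [fs [h1 h2]]. unfold c, g; simpl.
      destruct excluded_middle_informative as [e|n]; auto. exfalso; apply n; auto.
    + intros [l1 h1] [l2 h2] Heq. unfold g in Heq; simpl in Heq. injection Heq as ->.
      apply subset_eq_compat; auto.
    + intros [fs h] Hne. unfold c in Hne. destruct excluded_middle_informative as [e|n]; [|lra].
      exists (exist _ fs (conj h e)). unfold g; simpl. apply subset_eq_compat; auto.
Qed.

Lemma branching xi : HasSum (fun zeta => trans mu xi zeta * pw z zeta) (pw (fun p => Gen mu z p) xi).
Proof. apply stepB. Qed.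

End Branch.


Section Proc.
Context {X : Type} (mu : X -> SX X -> R) (Hprob : is_prob mu).

Lemma Hmu : forall x f, 0 <= mu x f.
Proof. intros; apply Hprob. Qed.

Definition Gf (z : X -> R) : X -> R := fun y => Gen mu z y.

Lemma gen_hs z : (forall y, 0 <= z y <= 1) -> forall p, HasSum (fun f => mu p f * pw z f) (Gen mu z p).
Proof.
  intros Hz p. unfold Gen. apply hs_tsum with 1. intros l Hl.
  eapply Rle_trans; [|apply (hs_ub _ _ (proj2 (Hprob p)) l Hl)].
  apply finsum_le. intros f _. destruct (pwl_bounds z (particles f) Hz). pose proof (Hmu p f).
  unfold pw, pwl in *. nra.
Qed.

Lemma Gf_bounds z : (forall y, 0 <= z y <= 1) -> forall y, 0 <= Gf z y <= 1.
Proof.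
  intros Hz y. pose proof (gen_hs z Hz y) as H. split; [eapply hs_nonneg; eauto|].
  eapply (hs_le _ _ _ _ _ H (proj2 (Hprob y))). Unshelve.
  intros f. destruct (pwl_bounds z (particles f) Hz). pose proof (Hmu y f). unfold pw, pwl in *. nra.
Qed.

Lemma Gf_mono z z' : (forall y, 0 <= z y <= z' y) -> (forall y, z' y <= 1) -> forall y, Gf z y <= Gf z' y.
Proof.
  intros H1 H2 y. apply (hs_le (fun f => mu y f * pw z f) (fun f => mu y f * pw z' f)).
  - intros f. apply Rmult_le_compat_l; [apply Hmu|]. apply pwl_mono; auto.
  - apply gen_hs. intros w; specialize (H1 w); specialize (H2 w); lra.
  - apply gen_hs. intros w; specialize (H1 w); specialize (H2 w); lra.
Qed.

Fixpoint iterG (n : nat) (z : X -> R) : X -> R :=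
  match n with O => z | S k => iterG k (Gf z) end.

Lemma iterG_bounds n : forall z, (forall y, 0 <= z y <= 1) -> forall y, 0 <= iterG n z y <= 1.
Proof. induction n; simpl; intros z Hz y; auto. apply IHn. apply Gf_bounds; auto. Qed.

Lemma iterG_S n : forall z, iterG (S n) z = Gf (iterG n z).
Proof. induction n; intros z; [reflexivity|]. simpl. rewrite <- IHn. reflexivity. Qed.

Lemma trans_nonneg xi zeta : 0 <= trans mu xi zeta.
Proof. rewrite trans_Tr. unfold Tr. apply tsum_nonneg. intros; apply W_nonneg; apply Hmu. Qed.

Theorem main_hs n : forall eta, (forall zeta, 0 <= transN mu n eta zeta) /\
  forall z, (forall y, 0 <= z y <= 1) ->
  HasSum (fun zeta => transN mu n eta zeta * pw z zeta) (pw (iterG n z) eta).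
Proof.
  induction n as [|n IH]; intros eta.
  - split.
    + intros zeta; simpl; destruct excluded_middle_informative; lra.
    + intros z Hz. simpl.
      pose proof (hs_single (fun zeta => (if excluded_middle_informative (eta = zeta) then 1 else 0) * pw z zeta) eta) as H.
      simpl in H. destruct (excluded_middle_informative (eta = eta)) as [_|n]; [|congruence].
      rewrite Rmult_1_l in H. apply H.
      * intros b. destruct excluded_middle_informative; [|lra]. rewrite Rmult_1_l. apply pw_nonneg; auto.
      * intros b Hb. destruct excluded_middle_informative; [congruence|lra].
  - destruct (IH eta) as [Hnn _]. split.
    + intros zeta. simpl. apply tsum_nonneg. intros xi. apply Rmult_le_pos; auto. apply trans_nonneg.
    + intros z Hz.
      assert (HGz := Gf_bounds z Hz).
      destruct (tonelli (fun xi zeta => transN mu n eta xi * (trans mu xi zeta * pw z zeta))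
                        (fun xi => transN mu n eta xi * pw (Gf z) xi)
                        (pw (iterG n (Gf z)) eta)) as [_ H].
      * intros xi zeta. apply Rmult_le_pos; auto. apply Rmult_le_pos; [apply trans_nonneg|apply pw_nonneg; auto].
      * intros xi. apply hs_scale; auto. apply branching; auto. apply Hmu. apply gen_hs; auto.
      * apply (proj2 (IH eta)); auto.
      * simpl. eapply hs_ext; [|exact H]. intros zeta. simpl.
        rewrite (tsum_ext _ (fun xi => pw z zeta * (transN mu n eta xi * trans mu xi zeta))) by (intros; ring).
        rewrite tsum_scale by (apply pw_nonneg; auto). ring.
Qed.

Lemma transN_zero n eta : transN mu n eta (zeroC X) = pw (iterG n (fun _ => 0)) eta.
Proof.
  assert (Hz : forall y : X, 0 <= (fun _ : X => 0) y <= 1) by (intros; lra).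
  destruct (main_hs n eta) as [Hnn H]. specialize (H _ Hz).
  pose proof (hs_single (fun zeta => transN mu n eta zeta * pw (fun _ => 0) zeta) (zeroC X)) as H'.
  cbv beta in H'. rewrite pw_zero_conf, Rmult_1_r in H'.
  symmetry. eapply hs_unique; [exact H|]. apply H'.
  - intros b. apply Rmult_le_pos; auto. apply pw_nonneg; auto.
  - intros b Hb. rewrite pw_zero_fun; auto; ring.
Qed.

Lemma transN_delta n x : transN mu n (deltaC x) (zeroC X) = iterG n (fun _ => 0) x.
Proof. rewrite transN_zero, pw_delta; auto. Qed.

End Proc.


Lemma one_div_le a b : 0 < a -> 1 <= b * a -> 1 / a <= b.
Proof. intros Ha H. apply Rmult_le_reg_r with a; auto. unfold Rdiv.
  rewrite Rmult_1_l, Rinv_l; lra. Qed.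

Section Surv.
Context {X : Type} (mu : X -> SX X -> R) (Hprob : is_prob mu) (Hbound : bounded_mean mu)
  (HG : forall z : X -> R, (forall y, 0 <= z y <= 1) ->
        forall x, Gen mu z x = 1 / (1 + tsum (fun y => mm mu x y * (1 - z y)))).

Lemma mm_nonneg y w : 0 <= mm mu y w.
Proof. unfold mm. apply tsum_nonneg. intros f. apply Rmult_le_pos; [apply pos_INR|apply (Hmu mu Hprob)]. Qed.

Lemma mrow y : HasSum (mm mu y) (tsum (mm mu y)).
Proof.
  destruct Hbound as [K HK]. apply hs_tsum with K. intros ly Hly.
  apply (sup_swap (fun w f => INR (cnt f w) * mu y f)).
  - intros; apply Rmult_le_pos; [apply pos_INR|apply (Hmu mu Hprob)].
  - intros w. unfold mm. apply hs_tsum with K. intros lf Hlf.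
    pose proof (HK y [w] lf (NoDup_cons _ (fun H : In _ nil => H) (NoDup_nil _)) Hlf). simpl in H. lra.
  - intros lf Hlf. apply HK; auto.
Qed.

Lemma dom_hs y g : (forall w, 0 <= g w <= mm mu y w) -> HasSum g (tsum g).
Proof.
  intros Hg. apply hs_tsum with (tsum (mm mu y)). intros l Hl.
  eapply Rle_trans; [|apply (hs_ub _ _ (mrow y) l Hl)]. apply finsum_le. intros w _; apply Hg.
Qed.

Definition A (z : X -> R) (y : X) : R := tsum (fun w => mm mu y w * (1 - z w)).

Lemma A_hs z y : (forall w, 0 <= z w <= 1) -> HasSum (fun w => mm mu y w * (1 - z w)) (A z y).
Proof. intros Hz. apply (dom_hs y). intros w. pose proof (mm_nonneg y w). specialize (Hz w). nra. Qed.

Lemma A_nonneg z y : (forall w, 0 <= z w <= 1) -> 0 <= A z y.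
Proof. intros Hz. eapply hs_nonneg. apply A_hs; auto. Qed.

Lemma Gf_A z y : (forall w, 0 <= z w <= 1) -> Gf mu z y = 1 / (1 + A z y).
Proof. intros Hz. unfold Gf. rewrite HG; auto. Qed.

Definition qn (n : nat) : X -> R := iterG mu n (fun _ => 0).

Lemma qn_bounds n y : 0 <= qn n y <= 1.
Proof. apply iterG_bounds; auto. intros; lra. Qed.

Lemma qn_S n : qn (S n) = Gf mu (qn n).
Proof. unfold qn. apply iterG_S. Qed.

Lemma qn_incr n y : qn n y <= qn (S n) y.
Proof.
  revert y; induction n; intros y.
  - pose proof (qn_bounds 1 y). unfold qn at 1; simpl. lra.
  - rewrite (qn_S (S n)), (qn_S n). apply Gf_mono; auto.
    + intros w; split; [apply qn_bounds|]. rewrite <- qn_S. apply IHn.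
    + intros; rewrite <- qn_S; apply qn_bounds.
Qed.

Lemma qn_mono n m y : (n <= m)%nat -> qn n y <= qn m y.
Proof. induction 1; [lra|]. pose proof (qn_incr m y). lra. Qed.

Lemma A_cont (q : X -> R) y :
  (forall w, 0 <= q w <= 1) -> (forall n w, qn n w <= q w) ->
  (forall w eps, 0 < eps -> exists n, q w - eps < qn n w) ->
  forall d, 0 < d -> exists n, A (qn n) y <= A q y + d.
Proof.
  intros Hq Hle Hconv d Hd.
  set (m := mm mu y). set (T := tsum m).
  assert (HT : HasSum m T) by apply mrow.
  assert (Hm : forall w, 0 <= m w) by (intros; apply mm_nonneg).
  assert (HT0 : 0 <= T) by (eapply hs_nonneg; eauto).
  assert (HL : exists L, NoDup L /\ finsum m L > T - d / 2).
  { destruct (excluded_middle_informative (exists L, NoDup L /\ finsum m L > T - d / 2)) as [e|n]; auto.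
    exfalso. assert (T <= T - d / 2); [|lra].
    eapply hs_least; eauto. intros L HL0. destruct (Rle_lt_dec (finsum m L) (T - d/2)); auto.
    exfalso; apply n; exists L; split; auto. }
  destruct HL as [L [HLnd HLs]].
  set (eps := d / (2 * (T + 1))).
  assert (Heps : 0 < eps) by (unfold eps; apply Rdiv_lt_0_compat; lra).
  assert (HN : exists N, forall w, In w L -> forall n, (N <= n)%nat -> q w - qn n w <= eps).
  { clear HLnd HLs. induction L as [|w L IH].
    - exists 0%nat; intros w [].
    - destruct IH as [N1 HN1]. destruct (Hconv w eps Heps) as [N2 HN2].
      exists (Nat.max N1 N2). intros w' [Hw|Hin] n Hn; [subst w'|].
      + pose proof (qn_mono N2 n w ltac:(lia)). lra.
      + apply HN1; auto; lia. }
  destruct HN as [N HN]. exists N.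
  set (D := fun w => m w * (q w - qn N w)).
  assert (HD0 : forall w, 0 <= D w <= m w).
  { intros w; unfold D. pose proof (Hle N w). pose proof (qn_bounds N w). specialize (Hq w).
    specialize (Hm w). split; nra. }
  assert (HD : HasSum D (tsum D)) by (apply (dom_hs y); auto).
  assert (HAN : A (qn N) y = A q y + tsum D).
  { unfold A. apply tsum_hs. eapply hs_ext; [|apply hs_add; [| |apply (A_hs q y Hq)|exact HD]].
    - intros w; unfold D, m. ring.
    - intros w. pose proof (Hm w). specialize (Hq w). unfold m in *. nra.
    - intros w; apply HD0. }
  rewrite HAN. assert (tsum D <= d); [|lra].
  eapply hs_least; [exact HD|]. intros L' HL'.
  set (h1 := fun w => if excluded_middle_informative (In w L) then m w else 0).
  set (h2 := fun w => if excluded_middle_informative (In w L) then 0 else m w).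
  assert (finsum D L' <= finsum (fun w => eps * h1 w + h2 w) L').
  { apply finsum_le. intros w _. unfold h1, h2. destruct excluded_middle_informative as [i|ni].
    - unfold D. pose proof (HN w i N (le_n _)). specialize (Hm w). nra.
    - unfold D. pose proof (Hle N w). pose proof (qn_bounds N w). specialize (Hq w).
      specialize (Hm w). nra. }
  rewrite finsum_plus, finsum_scal in H.
  assert (H1 : finsum h1 L' <= T).
  { eapply Rle_trans; [|apply (hs_ub _ _ HT L' HL')]. apply finsum_le. intros w _. unfold h1.
    destruct excluded_middle_informative; [lra|apply Hm]. }
  set (U := nodup decG (L' ++ L)).
  assert (HU : NoDup U) by apply NoDup_nodup.
  assert (Hh1 : forall w, 0 <= h1 w) by (intros; unfold h1; destruct excluded_middle_informative; auto; lra).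
  assert (Hh2 : forall w, 0 <= h2 w) by (intros; unfold h2; destruct excluded_middle_informative; auto; lra).
  assert (finsum h2 L' <= finsum h2 U).
  { apply finsum_incl; auto. intros a Ha. apply nodup_In, in_or_app; auto. }
  assert (finsum m L = finsum h1 L).
  { apply finsum_ext_in. intros w Hw. unfold h1. destruct excluded_middle_informative; tauto. }
  assert (finsum h1 L <= finsum h1 U).
  { apply finsum_incl; auto. intros a Ha. apply nodup_In, in_or_app; auto. }
  assert (finsum h1 U + finsum h2 U <= T).
  { rewrite <- finsum_plus. eapply Rle_trans; [|apply (hs_ub _ _ HT U HU)]. apply finsum_le.
    intros w _; unfold h1, h2; destruct excluded_middle_informative; lra. }
  assert (eps * finsum h1 L' <= d / 2).
  { apply Rle_trans with (eps * T); [apply Rmult_le_compat_l; lra|].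
    unfold eps. apply Rmult_le_reg_r with (2 * (T + 1)); [lra|].
    field_simplify; [|lra]. nra. }
  lra.
Qed.

Theorem surv_to_eq x : global_survival mu x ->
  exists v : X -> R, (forall y, 0 <= v y <= 1) /\ 0 < v x /\ forall y, eq_ratio (Mop mu v y) (v y).
Proof.
  intros [eps [Heps Hs]].
  assert (Hq : forall y, {l | is_lub (fun r => exists n, r = qn n y) l}).
  { intros y. apply completeness.
    - exists 1. intros r [n ->]. apply qn_bounds.
    - exists (qn 0 y); eauto. }
  set (q := fun y => proj1_sig (Hq y)).
  assert (Hqub : forall n y, qn n y <= q y).
  { intros n y. unfold q. destruct (Hq y) as [l [H1 H2]]; simpl. apply H1; eauto. }
  assert (Hqle1 : forall y, q y <= 1).
  { intros y. unfold q. destruct (Hq y) as [l [H1 H2]]; simpl. apply H2. intros r [n ->]. apply qn_bounds. }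
  assert (Hconv : forall w e, 0 < e -> exists n, q w - e < qn n w).
  { intros w e He. destruct (excluded_middle_informative (exists n, q w - e < qn n w)) as [i|ni]; auto.
    exfalso. assert (q w <= q w - e); [|lra]. unfold q at 1. destruct (Hq w) as [l [H1 H2]]; simpl.
    apply H2. intros r [n ->]. destruct (Rle_lt_dec (qn n w) (q w - e)); auto. exfalso; apply ni; eauto. }
  assert (Hq01 : forall y, 0 <= q y <= 1).
  { intros y. split; [|auto]. pose proof (Hqub 0%nat y). pose proof (qn_bounds 0 y). lra. }
  assert (Hqpos : forall y, 0 < q y).
  { intros y. pose proof (Hqub 1%nat y). rewrite qn_S in H. rewrite Gf_A in H by (intros; apply qn_bounds).
    pose proof (A_nonneg (qn 0) y (fun w => qn_bounds 0 w)).
    assert (0 < 1 / (1 + A (qn 0) y)) by (apply Rdiv_lt_0_compat; lra). lra. }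
  assert (Hqx : q x <= 1 - eps).
  { unfold q. destruct (Hq x) as [l [H1 H2]]; simpl. apply H2. intros r [n ->].
    specialize (Hs n). rewrite (transN_delta mu Hprob) in Hs. unfold qn. lra. }
  assert (Hfix : forall y, q y = 1 / (1 + A q y)).
  { intros y. rewrite <- Gf_A by auto. apply Rle_antisym.
    - unfold q at 1. destruct (Hq y) as [l [H1 H2]]; simpl. apply H2. intros r [n ->].
      destruct n.
      + pose proof (Gf_bounds mu Hprob q Hq01 y). unfold qn; simpl; lra.
      + rewrite qn_S. apply Gf_mono; auto. intros w; split; [apply qn_bounds|auto].
    - rewrite Gf_A by auto.
      pose proof (A_nonneg q y Hq01) as HA0.
      destruct (Rle_lt_dec (1 / (1 + A q y)) (q y)) as [ok|bad]; auto. exfalso.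
      set (d := 1 / q y - (1 + A q y)).
      assert (Hd : 0 < d).
      { unfold d. assert (q y * (1 + A q y) < 1).
        { apply Rmult_lt_reg_r with (/ (1 + A q y)); [apply Rinv_0_lt_compat; lra|].
          rewrite Rmult_assoc, Rinv_r, Rmult_1_r, Rmult_1_l by lra. unfold Rdiv in bad; lra. }
        apply Rmult_lt_reg_l with (q y); auto. field_simplify; [|specialize (Hqpos y); lra]. nra. }
      destruct (A_cont q y Hq01 Hqub Hconv (d / 2) ltac:(lra)) as [n Hn].
      pose proof (Hqub (S n) y) as Hqq. rewrite qn_S, Gf_A in Hqq by (intros; apply qn_bounds).
      pose proof (A_nonneg (qn n) y (qn_bounds n)) as HAn.
      assert (1 / (1 + A (qn n) y) >= 1 / (1 + A q y + d / 2)).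
      { apply Rle_ge. unfold Rdiv. rewrite !Rmult_1_l. apply Rinv_le_contravar; lra. }
      assert (1 / (1 + A q y + d / 2) > q y).
      { apply Rlt_gt. apply Rmult_lt_reg_r with (1 + A q y + d / 2); [lra|].
        unfold Rdiv. rewrite Rmult_1_l, Rinv_l by lra.
        assert (q y * (1 + A q y + d) = 1) by (unfold d; field; specialize (Hqpos y); lra).
        specialize (Hqpos y). nra. }
      lra. }
  exists (fun y => 1 - q y). split; [|split].
  - intros y; specialize (Hq01 y); specialize (Hqpos y); lra.
  - lra.
  - intros y. unfold eq_ratio, ratio. destruct Rlt_dec as [lt|nlt].
    + unfold Mop. cbv beta. fold (A q y). rewrite (Hfix y).
      pose proof (A_nonneg q y Hq01). field. lra.
    + specialize (Hqpos y); lra.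
Qed.

Theorem ge_to_surv x : (exists v : X -> R, (forall y, 0 <= v y <= 1) /\ 0 < v x /\
   forall y, ge_ratio (Mop mu v y) (v y)) -> global_survival mu x.
Proof.
  intros [v [Hv [Hvx Hge]]].
  set (z := fun y => 1 - v y).
  assert (Hz : forall y, 0 <= z y <= 1) by (intros y; unfold z; specialize (Hv y); lra).
  assert (HGz : forall y, Gf mu z y <= z y).
  { intros y. specialize (Hge y). unfold ge_ratio, ratio in Hge. destruct Rlt_dec as [lt|nlt]; [|contradiction].
    rewrite Gf_A by auto. unfold A, z.
    rewrite (tsum_ext _ (fun w => mm mu y w * v w)) by (intros; ring). fold (Mop mu v y).
    specialize (Hv y).
    assert (v y / (1 - v y) >= 0) by (apply Rle_ge; unfold Rdiv; apply Rmult_le_pos; [lra|left; apply Rinv_0_lt_compat; lra]).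
    assert ((1 - v y) * Mop mu v y >= v y).
    { assert (v y / (1 - v y) * (1 - v y) = v y) by (field; lra). nra. }
    apply one_div_le; nra. }
  assert (Hn : forall n y, qn n y <= z y).
  { induction n; intros y.
    - unfold qn; simpl. apply Hz.
    - rewrite qn_S. eapply Rle_trans; [|apply HGz]. apply Gf_mono; auto.
      + intros w; split; [apply qn_bounds|auto].
      + intros; apply Hz. }
  exists (v x). split; auto. intros n. rewrite (transN_delta mu Hprob). specialize (Hn n x).
  unfold qn, z in *. lra.
Qed.

End Surv.


Theorem mainTheorem12 (X : Type) (mu : X -> SX X -> R)
  (Hprob : is_prob mu) (Hbound : bounded_mean mu)
  (HG : forall z : X -> R, (forall y, 0 <= z y <= 1) ->
        forall x, Gen mu z x = 1 / (1 + tsum (fun y => mm mu x y * (1 - z y))))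
  (x : X) :
  (global_survival mu x <->
     exists v : X -> R, (forall y, 0 <= v y <= 1) /\ 0 < v x /\
       forall y, ge_ratio (Mop mu v y) (v y)) /\
  (global_survival mu x <->
     exists v : X -> R, (forall y, 0 <= v y <= 1) /\ 0 < v x /\
       forall y, eq_ratio (Mop mu v y) (v y)).
Proof.
  assert (E2G : (exists v : X -> R, (forall y, 0 <= v y <= 1) /\ 0 < v x /\
       forall y, eq_ratio (Mop mu v y) (v y)) ->
     exists v : X -> R, (forall y, 0 <= v y <= 1) /\ 0 < v x /\
       forall y, ge_ratio (Mop mu v y) (v y)).
  { intros [v [H1 [H2 H3]]]. exists v. split; [auto|split; [auto|]].
    intros y. specialize (H3 y). unfold eq_ratio, ge_ratio in *. destruct (ratio (v y)); auto.
    rewrite H3. apply Rge_refl. }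
  pose proof (surv_to_eq mu Hprob Hbound HG x) as S1.
  pose proof (ge_to_surv mu Hprob HG x) as S2.
  split; split; auto.
Qed.
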